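(* Let $f\colon\mathbb{R}^n\to\mathbb{R}$ be continuous and suppose there is $\gamma>0$ such that (i) the set $S_\gamma=\{z\in\mathbb{R}^n : f(z)\le\inf f+\gamma\}$ is compact, and (ii) every $x\in S_\gamma$ with $0\in\partial f(x)$ is a global minimizer of $f$. Let $t\in(0,\infty)$ and let $x\in\mathbb{R}^n$ be a local minimizer of $u(\cdot,t)$. If $t\ge\|x-x^\star\|^2/(2\gamma)$ for some global minimizer $x^\star$ of $f$, then $x$ is a global minimizer of $f$.
   Context: $u(x,t)=\inf_{z\in\mathbb{R}^n}\big(f(z)+\frac{1}{2t}\|z-x\|^2\big)$. The subdifferential $\partial f(\bar x)$ is the set of all $v\in\mathbb{R}^n$ such that $f(x)\ge f(\bar x)+\langle v,x-\bar x\rangle+o(\|x-\bar x\|)$ as $x\to\bar x$. *)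

(* Defs.v *)
From HB Require Import structures.
From mathcomp Require Import all_boot all_order all_algebra.
From mathcomp Require Import all_classical all_reals all_analysis.
Set Implicit Arguments. Unset Strict Implicit. Unset Printing Implicit Defensive.
Import Order.TTheory GRing.Theory Num.Theory.
Import numFieldNormedType.Exports.
Local Open Scope classical_set_scope.
Local Open Scope ring_scope.

Definition dotv {R : realType} {n : nat} (x y : 'rV[R]_n) : R :=
  \sum_(i < n) x ord0 i * y ord0 i.
Definition enorm {R : realType} {n : nat} (x : 'rV[R]_n) : R :=
  Num.sqrt (dotv x x).

(* Moreau envelope u(x,t) = inf_z ( f z + ||z - x||^2 / (2t) ) *)
Definition moreau {R : realType} {n : nat} (f : 'rV[R]_n -> R)
  (x : 'rV[R]_n) (t : R) : R :=
  inf [set f z + (enorm (z - x)) ^+ 2 / (2 * t) | z in [set: 'rV[R]_n]].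

(* Frechet subdifferential: f y >= f xb + <v, y - xb> + o(||y - xb||) *)
Definition subdiff {R : realType} {n : nat} (f : 'rV[R]_n -> R)
  (xb : 'rV[R]_n) : set 'rV[R]_n :=
  [set v | forall eps : R, 0 < eps -> exists2 delta : R, 0 < delta &
     forall y, enorm (y - xb) < delta ->
       f xb + dotv v (y - xb) - eps * enorm (y - xb) <= f y].

Definition global_min {R : realType} {n : nat} (f : 'rV[R]_n -> R)
  (x : 'rV[R]_n) : Prop := forall y, f x <= f y.

Definition local_min {R : realType} {n : nat} (g : 'rV[R]_n -> R)
  (x : 'rV[R]_n) : Prop := \forall y \near x, g x <= g y.

(* S_gamma = { z | f z <= inf f + gamma }, with inf f the greatest lower bound
   of f, i.e. f z - gamma <= f y for every y. *)
Definition sublevel_gamma {R : realType} {n : nat} (f : 'rV[R]_n -> R)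
  (gamma : R) : set 'rV[R]_n :=
  [set z | forall y, f z <= f y + gamma].

(* Main.v *)
Require Import Defs.
From HB Require Import structures.
From mathcomp Require Import all_boot all_order all_algebra.
From mathcomp Require Import all_classical all_reals all_analysis.
From mathcomp Require Import ring lra.
Import Order.TTheory GRing.Theory Num.Theory.
Import numFieldNormedType.Exports.
Local Open Scope classical_set_scope.
Local Open Scope ring_scope.
Section S.
Context {R : realType} {n : nat}.
Implicit Types v w : 'rV[R]_n.
Lemma dotv_ge0 v : 0 <= dotv v v.
Proof. by apply: sumr_ge0 => i _; rewrite -expr2 sqr_ge0. Qed.
Lemma enorm_ge0 v : 0 <= enorm v.
Proof. exact: sqrtr_ge0. Qed.
Lemma enorm_sq v : enorm v ^+ 2 = dotv v v.
Proof. by rewrite sqr_sqrtr // dotv_ge0. Qed.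
Lemma dotvZ (s : R) v : dotv (s *: v) (s *: v) = s ^+ 2 * dotv v v.
Proof. rewrite /dotv mulr_sumr; apply: eq_bigr => i _; rewrite !mxE; ring. Qed.
Lemma enormZ (s : R) v : enorm (s *: v) = `|s| * enorm v.
Proof. by rewrite /enorm dotvZ sqrtrM ?sqr_ge0 // sqrtr_sqr. Qed.
Lemma enormN v : enorm (- v) = enorm v.
Proof. by rewrite -scaleN1r enormZ normrN normr1 mul1r. Qed.
Lemma entry_le v i : `|v ord0 i| <= enorm v.
Proof.
rewrite -sqrtr_sqr /enorm ler_sqrt ?dotv_ge0 // /dotv (bigD1 i) //= -expr2 lerDl.
by apply: sumr_ge0 => j _; rewrite -expr2 sqr_ge0.
Qed.
Lemma mxnorm_le v : mx_norm v <= enorm v.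
Proof.
change (mx_norm v <= enorm v).
have [->|] := eqVneq (mx_norm v) 0; first exact: enorm_ge0.
move=> /mx_norm_neq0 [[i j] ->] /=.
by rewrite (ord1 i); apply: entry_le.
Qed.
End S.

Lemma near_enorm (R : realType) (n : nat) (x : 'rV[R]_n) (P : 'rV[R]_n -> Prop) :
  (\forall y \near x, P y) -> exists2 d : R, 0 < d & forall y, enorm (y - x) < d -> P y.
Proof.
move=> /nbhs_ballP [d /= d0 Hd]; exists d => // y hy; apply: Hd.
rewrite mx_norm_ball /ball_ /=.
rewrite -opprB normrN. change (mx_norm (y - x) < d).
exact: le_lt_trans (mxnorm_le _) hy.
Qed.

Arguments near_enorm {R n x P}.

Lemma alg_key (R : realType) (dl rho d t s e : R) : 0 < dl -> 0 < rho -> rho <= d -> 0 < t ->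
  s * (dl + d) = dl -> e <= rho ^+ 2 * dl / ((dl + rho) * (2 * t)) ->
  ~ (d ^+ 2 / (2 * t) < (1 - s) ^+ 2 * d ^+ 2 / (2 * t) + e).
Proof.
move=> dl0 r0 rd t0 hs he.
have s0 : 0 < s.
  have : 0 < s * (dl + d) by rewrite hs.
  by rewrite pmulr_lgt0 // ltr_wpDr // (le_trans (ltW r0)).
have s1 : s <= 1.
  have hd : 0 < d by apply: lt_le_trans rd.
  nra.
have k1 : rho ^+ 2 * dl <= d ^+ 2 * s * (dl + rho).
  have h : rho ^+ 2 * (dl + d) <= d ^+ 2 * (dl + rho).
    have hd : 0 < d by apply: lt_le_trans rd.
    have : rho * rho <= d * d by rewrite ler_pM // ltW.
    have : rho * d * rho <= rho * d * d by rewrite ler_pM2l ?mulr_gt0.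
    rewrite !expr2; nra.
  rewrite -{1}hs.
  have : s * (rho ^+ 2 * (dl + d)) <= s * (d ^+ 2 * (dl + rho)) by rewrite ler_wpM2l // ltW.
  have -> : rho ^+ 2 * (s * (dl + d)) = s * (rho ^+ 2 * (dl + d)) by ring.
  have -> : d ^+ 2 * s * (dl + rho) = s * (d ^+ 2 * (dl + rho)) by ring.
  done.
have k2 : rho ^+ 2 * dl / ((dl + rho) * (2 * t)) <= d ^+ 2 * s * (2 - s) / (2 * t).
  rewrite ler_pdivrMr ?mulr_gt0 ?addr_gt0 //.
  have -> : d ^+ 2 * s * (2 - s) / (2 * t) * ((dl + rho) * (2 * t)) = d ^+ 2 * s * (2 - s) * (dl + rho).
    by field; rewrite gt_eqF ?mulr_gt0.
  have : 0 <= d ^+ 2 * s * (dl + rho) * (1 - s).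
    have := ltW s0; have := ltW dl0; have := ltW r0; have := le_trans (ltW r0) rd; move=> *; by rewrite !mulr_ge0 ?sqr_ge0 ?subr_ge0 ?addr_ge0.
  move=> h0.
  have -> : d ^+ 2 * s * (2 - s) * (dl + rho) = d ^+ 2 * s * (dl + rho) + d ^+ 2 * s * (dl + rho) * (1 - s) by ring.
  lra.
have -> : (1 - s) ^+ 2 * d ^+ 2 / (2 * t) = d ^+ 2 / (2 * t) - d ^+ 2 * s * (2 - s) / (2 * t).
  by field; rewrite gt_eqF ?mulr_gt0.
lra.
Qed.

Theorem lemma6 (R : realType) (n : nat) (f : 'rV[R]_n -> R) (gamma : R)
  (hf : continuous f) (hgamma : 0 < gamma)
  (hcomp : compact (sublevel_gamma f gamma))
  (hcrit : forall x, sublevel_gamma f gamma x -> subdiff f x 0 -> global_min f x)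
  (t : R) (ht : 0 < t) (x : 'rV[R]_n)
  (hloc : local_min (fun y => moreau f y t) x)
  (xstar : 'rV[R]_n) (hxstar : global_min f xstar)
  (htx : (enorm (x - xstar)) ^+ 2 / (2 * gamma) <= t) :
  global_min f x.
Proof.
have t2 : 0 < 2 * t by rewrite mulr_gt0.
have hinf : forall y, has_inf [set f z + (enorm (z - y)) ^+ 2 / (2 * t) | z in [set: 'rV[R]_n]].
  move=> y; split; first by exists (f y + enorm (y - y) ^+ 2 / (2 * t)); exists y.
  exists (f xstar) => _ [z _ <-].
  by rewrite -[f xstar]addr0 lerD // divr_ge0 // ?sqr_ge0 // ltW.
have hA : forall y z, moreau f y t <= f z + enorm (z - y) ^+ 2 / (2 * t).
  by move=> y z; apply: (ge_inf (hinf y).2); exists z.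
have hB : forall y e, 0 < e -> exists z, f z + enorm (z - y) ^+ 2 / (2 * t) < moreau f y t + e.
  move=> y e e0; have [_ [z _ <-] hz] := inf_adherent e0 (hinf y).
  by exists z.
have [dl dl0 hC] := near_enorm hloc.
have hD : forall eta, 0 < eta -> exists2 rho, 0 < rho & forall z, enorm (z - x) < rho -> f x < f z + eta.
  move=> eta eta0; have [rho rho0 H] := near_enorm (cvgr_dist_lt f (f x) (hf x) _ eta0).
  exists rho => // z /H; rewrite ltr_norml => /andP[_]; lra.
have hmain : f x <= moreau f x t.
  apply/ler_addgt0Pr => eta eta0.
  have eta2 : 0 < eta / 2 by rewrite divr_gt0.
  have [rho rho0 hrho] := hD _ eta2.
  pose e2 := rho ^+ 2 * dl / ((dl + rho) * (2 * t)).
  have e20 : 0 < e2 by rewrite /e2 divr_gt0 ?mulr_gt0 ?exprn_gt0 ?addr_gt0.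
  pose e := Num.min (eta / 2) e2.
  have e0 : 0 < e by rewrite lt_min eta2 e20.
  have [z hz] := hB x e e0.
  set d := enorm (z - x).
  have d0 : 0 <= d := enorm_ge0 _.
  have drho : d < rho.
    rewrite ltNge; apply/negP => rd.
    pose s := dl / (dl + d).
    have dd0 : 0 < dl + d by rewrite ltr_wpDr.
    have hs : s * (dl + d) = dl by rewrite /s mulfVK // gt_eqF.
    have s0 : 0 <= s by rewrite /s divr_ge0 // ltW.
    have s1 : s <= 1 by rewrite /s ler_pdivrMr // mul1r lerDl.
    pose y := x + s *: (z - x).
    have hy : enorm (y - x) < dl.
      rewrite /y addrAC subrr add0r enormZ ger0_norm // -/d.
      have : s * d < s * (dl + d).
        rewrite ltr_pM2l; [lra|by rewrite /s divr_gt0].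
      by rewrite hs.
    have h1 := hC _ hy.
    have h2 := hA y z.
    have hzy : z - y = (1 - s) *: (z - x) by rewrite /y scalerBl scale1r opprD addrA.
    rewrite hzy enormZ ger0_norm ?subr_ge0 // -/d exprMn in h2.
    have hee : e <= e2 by rewrite ge_min lexx orbT.
    have hk := @alg_key _ _ _ _ _ _ _ dl0 rho0 rd ht hs hee.
    change (enorm (z - x)) with d in hz.
    apply: hk. lra.
  have := hrho z drho.
  change (enorm (z - x)) with d in hz.
  have : e <= eta / 2 by rewrite ge_min lexx.
  have : 0 <= d ^+ 2 / (2 * t) by rewrite divr_ge0 ?sqr_ge0 // ltW.
  lra.
have hprox : forall w, f x <= f w + enorm (w - x) ^+ 2 / (2 * t).
  by move=> w; apply: le_trans hmain (hA x w).
apply: hcrit.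
- move=> y; apply: le_trans (hprox xstar) _.
  rewrite -opprB enormN; apply: lerD; first exact: hxstar.
  move: htx; rewrite !ler_pdivrMr ?mulr_gt0 // => htx; nra.
- move=> eps eps0; exists (2 * t * eps); first by rewrite mulr_gt0.
  move=> y hy.
  have -> : dotv 0 (y - x) = 0 by rewrite /dotv big1 // => i _; rewrite mxE mul0r.
  have := hprox y.
  have e0 := enorm_ge0 (y - x).
  have : enorm (y - x) ^+ 2 / (2 * t) <= eps * enorm (y - x).
    rewrite ler_pdivrMr //; nra.
  lra.
Qed.
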